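(* Assume: (A1) $f(x,y)$ and each component of $g(x,y)$ are convex in $y$ for each fixed $x$, and $f,g$ are twice continuously differentiable; (A2) $Y\subseteq\mathbb{R}^m$ is a compact convex set with $\{y:\exists x\in X \text{ such that } g(x,y)\le 0\}\subseteq\mathrm{int}(Y)$; (R1) for each $x\in X$ there exists $y$ with $g(x,y)<0$. Let $\epsilon\ge0$. A point $(\overline{x},\overline{y})$ is a (global) minimizer of $\mathsf{BLP}(\epsilon)$ if and only if for some $\lambda\ge0$ the point $(\overline{x},\overline{y},\lambda)$ is feasible for and a (global) minimizer of $\mathsf{DBP}(\epsilon,0)$.
   Context: Let $F:\mathbb{R}^n\times\mathbb{R}^m\to\mathbb{R}$, $f:\mathbb{R}^n\times\mathbb{R}^m\to\mathbb{R}$, $g:\mathbb{R}^n\times\mathbb{R}^m\to\mathbb{R}^p$, $G:\mathbb{R}^n\to\mathbb{R}^q$; vector inequalities componentwise; $X=\{x:G(x)\le0\}$. $\mathsf{BLP}(\epsilon)$ is: minimize $F(x,y)$ over $(x,y)$ subject to $G(x)\le0$, $f(x,y)\le\min_{y'}\{f(x,y'):g(x,y')\le0\}+\epsilon$ and $g(x,y)\le\epsilon$. For $\mu\ge0$, $h_\mu(\lambda,x)=\min_y\{\mu\|y\|^2+f(x,y)+\lambda^{\mathsf T}g(x,y):y\in Y\}$ with $Y$ from (A2); $\mathcal{C}(\epsilon,\mu)=\{(x,y,\lambda): G(x)\le0,\ g(x,y)\le\epsilon,\ \lambda\ge0,\ f(x,y)-h_\mu(\lambda,x)\le\epsilon\}$;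 and $\mathsf{DBP}(\epsilon,\mu)$ is: minimize $F(x,y)$ over $(x,y,\lambda)\in\mathcal{C}(\epsilon,\mu)$. *)

(* Defs.v *)
From HB Require Import structures.
From mathcomp Require Import all_boot all_order all_algebra.
From mathcomp Require Import all_classical all_reals all_analysis.
Set Implicit Arguments. Unset Strict Implicit. Unset Printing Implicit Defensive.
Import Order.TTheory GRing.Theory Num.Theory.
Import numFieldNormedType.Exports.
Local Open Scope classical_set_scope.
Local Open Scope ring_scope.

Section Defs.
Variable R : realType.

Definition vle k (u v : 'rV[R]_k) : Prop := forall i, u 0 i <= v 0 i.
Definition vlt k (u v : 'rV[R]_k) : Prop := forall i, u 0 i < v 0 i.
Definition vle_sc k (u : 'rV[R]_k) (e : R) : Prop := forall i, u 0 i <= e.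

Definition dotp k (u v : 'rV[R]_k) : R := \sum_(i < k) u 0 i * v 0 i.
Definition sqnorm k (u : 'rV[R]_k) : R := \sum_(i < k) u 0 i ^+ 2.

Definition convex_setR k (A : set 'rV[R]_k) : Prop :=
  forall y1 y2 t, A y1 -> A y2 -> 0 <= t <= 1 -> A (t *: y1 + (1 - t) *: y2).
Definition convex_fun k (h : 'rV[R]_k -> R) : Prop :=
  forall y1 y2 t, 0 <= t <= 1 ->
    h (t *: y1 + (1 - t) *: y2) <= t * h y1 + (1 - t) * h y2.

Definition ev k (i : 'I_k) : 'rV[R]_k := delta_mx 0 i.

Definition C2 k (h : 'rV[R]_k -> R) : Prop :=
  continuous h /\
  forall i j : 'I_k,
    (forall z, derivable h z (ev i)) /\
    continuous (fun z => 'D_(ev i) h z) /\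
    (forall z, derivable (fun w => 'D_(ev j) h w) z (ev i)) /\
    continuous (fun z => 'D_(ev i) (fun w => 'D_(ev j) h w) z).

Definition uncurryv n m (T : Type) (h : 'rV[R]_n -> 'rV[R]_m -> T)
  : 'rV[R]_(n + m) -> T := fun z => h (lsubmx z) (rsubmx z).

Variables (n m p q : nat).
Variables (F f : 'rV[R]_n -> 'rV[R]_m -> R)
          (g : 'rV[R]_n -> 'rV[R]_m -> 'rV[R]_p)
          (G : 'rV[R]_n -> 'rV[R]_q) (Y : set 'rV[R]_m).

Definition Xset : set 'rV[R]_n := fun x => vle (G x) 0.

Definition llval (x : 'rV[R]_n) : R :=
  inf [set f x y' | y' in [set y' | vle (g x y') 0]].

Definition BLP_feasible (eps : R) (x : 'rV[R]_n) (y : 'rV[R]_m) : Prop :=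
  vle (G x) 0 /\ f x y <= llval x + eps /\ vle_sc (g x y) eps.

Definition BLP_minimizer (eps : R) (xb : 'rV[R]_n) (yb : 'rV[R]_m) : Prop :=
  BLP_feasible eps xb yb /\
  forall x y, BLP_feasible eps x y -> F xb yb <= F x y.

Definition h_mu (mu : R) (lam : 'rV[R]_p) (x : 'rV[R]_n) : R :=
  inf [set mu * sqnorm y + f x y + dotp lam (g x y) | y in Y].

Definition Cset (eps mu : R) (x : 'rV[R]_n) (y : 'rV[R]_m) (lam : 'rV[R]_p)
  : Prop :=
  vle (G x) 0 /\ vle_sc (g x y) eps /\ vle 0 lam /\ f x y - h_mu mu lam x <= eps.

Definition DBP_minimizer (eps mu : R) (xb : 'rV[R]_n) (yb : 'rV[R]_m)
  (lb : 'rV[R]_p) : Prop :=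
  Cset eps mu xb yb lb /\
  forall x y lam, Cset eps mu x y lam -> F xb yb <= F x y.

End Defs.

(* Main.v *)
Require Import Defs.
From HB Require Import structures.
From mathcomp Require Import all_boot all_order all_algebra.
From mathcomp Require Import all_classical all_reals all_analysis.
From mathcomp Require Import ring lra.
Import Order.TTheory GRing.Theory Num.Theory.
Import numFieldNormedType.Exports.
Local Open Scope classical_set_scope.
Local Open Scope ring_scope.
Set Implicit Arguments. Unset Strict Implicit. Unset Printing Implicit Defensive.

Lemma cont_add (R : realType) (T : topologicalType) (a b : T -> R) :
  continuous a -> continuous b -> continuous (fun z => a z + b z).
Proof. by move=> ca cb z; apply: cvgD; [apply: ca|apply: cb]. Qed.

Lemma cont_mul (R : realType) (T : topologicalType) (a b : T -> R) :
  continuous a -> continuous b -> continuous (fun z => a z * b z).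
Proof. by move=> ca cb z; apply: cvgM; [apply: ca|apply: cb]. Qed.

Lemma cont_cst (R : realType) (T : topologicalType) (c : R) :
  continuous (fun _ : T => c).
Proof. by move=> z; apply: cvg_cst. Qed.

Lemma cont_opp (R : realType) (T : topologicalType) (a : T -> R) :
  continuous a -> continuous (fun z => - a z).
Proof. by move=> ca z; apply: cvgN; apply: ca. Qed.

Lemma cont_norm (R : realType) (T : topologicalType) (a : T -> R) :
  continuous a -> continuous (fun z => `|a z|).
Proof. by move=> ca z; apply: cvg_norm; apply: ca. Qed.

Lemma cont_sum (R : realType) (T : topologicalType) k (h : 'I_k -> T -> R) :
  (forall i, continuous (h i)) -> continuous (fun z => \sum_(i < k) h i z).
Proof.
elim: k h => [|k IH] h hc.
  by under eq_fun do rewrite big_ord0; apply: cont_cst.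
under eq_fun do rewrite big_ord_recr /=.
apply: cont_add; last exact: hc.
exact: (IH (fun i => h (widen_ord (leqnSn k) i))).
Qed.

Lemma cont_row_mx (R : realType) n m (x : 'rV[R]_n) :
  continuous (fun y : 'rV[R]_m => row_mx x y).
Proof.
move=> y s /= /(nbhs_ballP (row_mx x y)) [e e0 es].
apply/nbhs_ballP; exists e => //= y' [_ yy']; apply: es; split => // i j.
rewrite !mxE; case: splitP => k _; first exact: ballxx.
exact: yy'.
Qed.
Lemma lip_cont (R : realType) (V : normedModType R) (h : V -> R) (C : R) :
  0 <= C -> (forall a b, `|h a - h b| <= C * `|a - b|) -> continuous h.
Proof.
move=> C0 hl x; apply/cvgrPdist_lt => e e0.
have : \forall y \near x, `|x - y| < e / (C + 1).
  apply/nbhs_normP; exists (e / (C + 1)); first by rewrite /= divr_gt0 // ltr_wpDl.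
  by move=> y /=.
apply: filterS => y hy.
apply: le_lt_trans (hl x y) _.
have hC1 : 0 < C + 1 by rewrite ltr_wpDl.
have := hy; rewrite ltr_pdivlMr // => hy'.
apply: le_lt_trans hy'.
by rewrite mulrC ler_wpM2l ?normr_ge0 // lerDl.
Qed.

Lemma mx_entry_le (R : realType) m n (A : 'M[R]_(m, n)) i j : `|A i j| <= `|A|.
Proof.
rewrite [leRHS]/Num.norm /= mx_normrE.
by apply/bigmax_geP; right => /=; exists (i, j).
Qed.

Lemma EVTmin (R : realType) m (h : 'rV[R]_m -> R) (Y : set 'rV[R]_m) :
  continuous h -> compact Y -> Y !=set0 ->
  exists2 c, Y c & forall y, Y y -> h c <= h y.
Proof.
move=> ch cY Y0.
have [c cY' hc] := compact_EVT_min Y0 cY (continuous_subspaceT ch).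
by exists c; [rewrite inE in cY' | move=> y Yy; apply: hc; rewrite inE].
Qed.

Lemma lb_img (R : realType) m (h : 'rV[R]_m -> R) (Y : set 'rV[R]_m) :
  continuous h -> compact Y -> Y !=set0 -> has_lbound [set h y | y in Y].
Proof.
move=> ch cY Y0; have [c _ hc] := EVTmin ch cY Y0.
by exists (h c) => _ [y Yy <-]; apply: hc.
Qed.

Lemma term_le_sum (R : realType) k (a : 'I_k -> R) i :
  (forall j, 0 <= a j) -> a i <= \sum_(j < k) a j.
Proof.
move=> a0; rewrite (bigD1 i) //= lerDl; apply: sumr_ge0 => j _; exact: a0.
Qed.

Definition pos (R : realType) (a : R) : R := if a <= 0 then 0 else a.

Lemma posN (R : realType) (a : R) : a <= 0 -> pos a = 0.
Proof. by rewrite /pos => ->. Qed.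

Lemma posP (R : realType) (a : R) : 0 < a -> pos a = a.
Proof. by rewrite /pos ltNge => /negbTE ->. Qed.

Lemma pos_sq (R : realType) (a t : R) :
  (pos (a + t)) ^+ 2 <= (pos a) ^+ 2 + 2 * pos a * t + t ^+ 2.
Proof.
have [ha|ha] := lerP a 0; have [hb|hb] := lerP (a + t) 0;
  rewrite ?(posN ha) ?(posN hb) ?(posP ha) ?(posP hb); nra.
Qed.

Lemma pos_sq_mono (R : realType) (a b : R) : a <= b ->
  (pos a) ^+ 2 <= (pos b) ^+ 2.
Proof.
move=> ab; have [ha|ha] := lerP a 0; have [hb|hb] := lerP b 0;
  rewrite ?(posN ha) ?(posN hb) ?(posP ha) ?(posP hb); nra.
Qed.

Lemma pos_mul (R : realType) (a : R) : pos a * a = (pos a) ^+ 2.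
Proof. by rewrite /pos; case: ifP => ha; rewrite ?mul0r ?expr2 ?mul0r. Qed.

Lemma pos_ge0 (R : realType) (a : R) : 0 <= pos a.
Proof. by have [ha|ha] := lerP a 0; rewrite ?(posN ha) ?(posP ha) // ltW. Qed.

Lemma pos_le0 (R : realType) (a : R) : pos a = 0 -> a <= 0.
Proof. by have [ha|ha] := lerP a 0; rewrite ?(posN ha) ?(posP ha) // => h; move: ha; rewrite h ltxx. Qed.

Lemma pos_abs (R : realType) (a : R) : pos a = (a + `|a|) / 2.
Proof.
have [ha|ha] := lerP a 0.
  by rewrite (posN ha) ler0_norm // subrr mul0r.
rewrite (posP ha) gtr0_norm //.
field; lra.
Qed.

Lemma cont_pos (R : realType) (T : topologicalType) (a : T -> R) :
  continuous a -> continuous (fun z => pos (a z)).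
Proof.
move=> ca; under eq_fun do rewrite pos_abs.
apply: cont_mul; last exact: cont_cst.
by apply: cont_add => //; apply: cont_norm.
Qed.

Lemma small_s (R : realType) (E Q : R) : 0 <= Q ->
  (forall s, 0 < s <= 1 -> 0 <= 2 * s * E + s ^+ 2 * Q) -> 0 <= E.
Proof.
move=> Q0 H; rewrite leNgt; apply/negP => E0.
have QE : 0 < Q - E by lra.
pose s := - E / (Q - E).
have hs : s * (Q - E) = - E by rewrite /s mulfVK // gt_eqF.
have s0 : 0 < s by rewrite /s divr_gt0 // oppr_gt0.
have s1 : s <= 1 by rewrite /s ler_pdivrMr // mul1r; lra.
have := H s; rewrite s0 s1 => /(_ isT) h.
nra.
Qed.

Lemma cont_Lag (R : realType) m p (fy : 'rV[R]_m -> R) (gy : 'rV[R]_m -> 'rV[R]_p)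
  (lam : 'rV[R]_p) :
  continuous fy -> (forall k, continuous (fun y => gy y 0 k)) ->
  continuous (fun y => 0 * sqnorm y + fy y + dotp lam (gy y)).
Proof.
move=> cf cg; under eq_fun do rewrite mul0r add0r.
apply: cont_add => //; rewrite /dotp.
apply: cont_sum => i; apply: cont_mul; [exact: cont_cst | exact: cg].
Qed.

Lemma weak_dual (R : realType) m p (fy : 'rV[R]_m -> R) (gy : 'rV[R]_m -> 'rV[R]_p)
  (Y : set 'rV[R]_m) :
  continuous fy -> (forall k, continuous (fun y => gy y 0 k)) -> compact Y ->
  (forall y, vle (gy y) 0 -> Y y) -> (exists y, vle (gy y) 0) ->
  forall lam, vle 0 lam ->
  inf [set 0 * sqnorm y + fy y + dotp lam (gy y) | y in Y] <=
  inf [set fy y | y in [set y | vle (gy y) 0]].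
Proof.
move=> cf cg cY sub [y0 hy0] lam hlam.
have Y0 : Y !=set0 by exists y0; apply: sub.
apply: lb_le_inf; first by exists (fy y0), y0.
move=> _ [y hy <-].
have hlb := lb_img (cont_Lag (lam:=lam) cf cg) cY Y0.
apply: le_trans (ge_inf hlb _) _; first by exists y => //; apply: sub.
rewrite mul0r add0r gerDl /dotp; apply: sumr_le0 => i _.
have := hlam i; have := hy i; rewrite !mxE => h1 h2.
exact: mulr_ge0_le0.
Qed.

Lemma cont_sq (R : realType) (T : topologicalType) (a : T -> R) :
  continuous a -> continuous (fun z => a z ^+ 2).
Proof. by move=> ca; under eq_fun do rewrite expr2; apply: cont_mul. Qed.

Lemma approx_dual (R : realType) m p (fy : 'rV[R]_m -> R) (gy : 'rV[R]_m -> 'rV[R]_p)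
  (Y : set 'rV[R]_m) :
  continuous fy -> (forall k, continuous (fun y => gy y 0 k)) ->
  convex_fun fy -> (forall k, convex_fun (fun y => gy y 0 k)) ->
  compact Y -> convex_setR Y ->
  (forall y, vle (gy y) 0 -> Y y) -> (exists y, vlt (gy y) 0) ->
  forall c, (forall y, vle (gy y) 0 -> c < fy y) ->
  exists lam, vle 0 lam /\ forall y, Y y -> c <= fy y + dotp lam (gy y).
Proof.
move=> cf cg vf vg cY vY sub [yb hyb] c hc.
have Y0 : Y !=set0.
  by exists yb; apply: sub => i; rewrite mxE; apply: ltW; have := hyb i; rewrite mxE.
pose D y := \sum_(k < p) (pos (gy y 0 k)) ^+ 2 + (pos (fy y - c)) ^+ 2.
have cD : continuous D.
  apply: cont_add.
    by apply: cont_sum => k; apply: cont_sq; apply: cont_pos.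
  by apply: cont_sq; apply: cont_pos; apply: cont_add => //; apply: cont_cst.
have [ys Yys hys] := EVTmin cD cY Y0.
pose w k := pos (gy ys 0 k).
pose w0 := pos (fy ys - c).
have VI : forall y, Y y ->
   0 <= \sum_(k < p) w k * (gy y 0 k - gy ys 0 k) + w0 * (fy y - fy ys).
  move=> y Yy.
  apply: (@small_s _ _ (\sum_(k < p) (gy y 0 k - gy ys 0 k) ^+ 2 + (fy y - fy ys) ^+ 2)).
    by apply: addr_ge0; [apply: sumr_ge0 => k _|]; apply: sqr_ge0.
  move=> s /andP [s0 s1].
  pose z := s *: y + (1 - s) *: ys.
  have Yz : Y z by apply: vY => //; rewrite (ltW s0) s1.
  have h1 := hys z Yz.
  have h2 : D z <= \sum_(k < p) ((w k) ^+ 2 + 2 * w k * (s * (gy y 0 k - gy ys 0 k))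
                  + (s * (gy y 0 k - gy ys 0 k)) ^+ 2)
             + ((w0) ^+ 2 + 2 * w0 * (s * (fy y - fy ys)) + (s * (fy y - fy ys)) ^+ 2).
    apply: lerD.
      apply: ler_sum => k _; apply: le_trans (pos_sq _ _).
      apply: pos_sq_mono; have := vg k y ys s; rewrite (ltW s0) s1 => /(_ isT) h.
      apply: le_trans h _; lra.
    apply: le_trans (pos_sq _ _).
    apply: pos_sq_mono; have := vf y ys s; rewrite (ltW s0) s1 => /(_ isT) h.
    rewrite /z; lra.
  have e1 : \sum_(k < p) ((w k) ^+ 2 + 2 * w k * (s * (gy y 0 k - gy ys 0 k))
                  + (s * (gy y 0 k - gy ys 0 k)) ^+ 2) =
      \sum_(k < p) (w k) ^+ 2 + 2 * s * (\sum_(k < p) w k * (gy y 0 k - gy ys 0 k))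
      + s ^+ 2 * \sum_(k < p) (gy y 0 k - gy ys 0 k) ^+ 2.
    rewrite !mulr_sumr -!big_split /=; apply: eq_bigr => k _; ring.
  rewrite e1 in h2.
  have h3 := le_trans h1 h2.
  rewrite /D in h3.
  set SW := \sum_(k < p) _ ^+ 2 in h3.
  set SE := \sum_(k < p) w k * _ in h3 *.
  set SQ := \sum_(k < p) (gy y 0 k - gy ys 0 k) ^+ 2 in h3 *.
  rewrite -/w0 in h3.
  nra.
have w_ge0 k : 0 <= w k by apply: pos_ge0.
have w0_ge0 : 0 <= w0 by apply: pos_ge0.
pose N := \sum_(k < p) (w k) ^+ 2 + w0 ^+ 2.
have VI' : forall y, Y y ->
    N <= \sum_(k < p) w k * gy y 0 k + w0 * (fy y - c).
  move=> y Yy; have := VI y Yy.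
  under eq_bigr do rewrite mulrBr.
  rewrite sumrB.
  have -> : \sum_(k < p) w k * gy ys 0 k = \sum_(k < p) (w k) ^+ 2.
    by apply: eq_bigr => k _; rewrite /w pos_mul.
  have e : w0 * (fy ys - c) = w0 ^+ 2 by rewrite /w0 pos_mul.
  rewrite /N; nra.
have SW0 : 0 <= \sum_(k < p) (w k) ^+ 2 by apply: sumr_ge0 => k _; apply: sqr_ge0.
have N0 : 0 < N.
  rewrite ltNge; apply/negP => N0.
  have w00 : w0 = 0.
    apply/eqP; rewrite -sqrf_eq0 eq_le sqr_ge0 andbT; rewrite /N in N0; lra.
  have feas : vle (gy ys) 0.
    move=> k; rewrite mxE; apply: pos_le0; apply/eqP.
    rewrite -sqrf_eq0 eq_le sqr_ge0 andbT.
    have := term_le_sum k (fun j => sqr_ge0 (w j)); rewrite /N in N0 => h.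
    rewrite -/(w k); have := sqr_ge0 w0; lra.
  have := hc ys feas; have := pos_le0 w00; lra.
have ybf : vle (gy yb) 0.
  by move=> i; rewrite mxE; apply: ltW; have := hyb i; rewrite mxE.
have w0_gt0 : 0 < w0.
  rewrite lt_def w0_ge0 andbT; apply/negP => /eqP w00.
  have h' := VI' yb (sub yb ybf).
  have h : \sum_(k < p) w k * gy yb 0 k <= 0.
    apply: sumr_le0 => k _; apply: mulr_ge0_le0 => //.
    by apply: ltW; have := hyb k; rewrite mxE.
  rewrite w00 mul0r addr0 in h'.
  have : N <= 0 by lra.
  by rewrite leNgt N0.
exists (\row_k (w k / w0)); split.
  by move=> k; rewrite !mxE; apply: divr_ge0.
move=> y Yy; rewrite /dotp.
have -> : \sum_(i < p) (\row_k (w k / w0)) 0 i * gy y 0 i =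
          (\sum_(k < p) w k * gy y 0 k) / w0.
  by rewrite mulr_suml; apply: eq_bigr => k _; rewrite mxE mulrAC.
have := VI' y Yy => h.
have h2 : w0 * (c - fy y) <= \sum_(k < p) w k * gy y 0 k by nra.
have : c - fy y <= (\sum_(k < p) w k * gy y 0 k) / w0.
  by rewrite ler_pdivlMr // mulrC.
lra.
Qed.

Lemma EVTmax (R : realType) m (h : 'rV[R]_m -> R) (Y : set 'rV[R]_m) :
  continuous h -> compact Y -> Y !=set0 ->
  exists2 c, Y c & forall y, Y y -> h y <= h c.
Proof.
move=> ch cY Y0.
have [c cY' hc] := compact_EVT_max Y0 cY (continuous_subspaceT ch).
by exists c; [rewrite inE in cY' | move=> y Yy; apply: hc; rewrite inE].
Qed.

Lemma le_by_delta (R : realType) (v a : R) :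
  (forall d, 0 < d <= 1 -> v - d <= a) -> v <= a.
Proof.
move=> H; rewrite leNgt; apply/negP => av.
pose d := (v - a) / (1 + (v - a)).
have hd : d * (1 + (v - a)) = v - a by rewrite /d mulfVK // gt_eqF // ltr_wpDr // ?ltW ?subr_gt0.
have d0 : 0 < d by rewrite /d divr_gt0 // ?subr_gt0 // ltr_wpDr // ?ltW ?subr_gt0.
have d1 : d <= 1.
  by rewrite /d ler_pdivrMr ?mul1r ?lerDr ?ler01 // ltr_wpDr // ?ltW ?subr_gt0.
have := H d; rewrite d0 d1 => /(_ isT) h.
nra.
Qed.

Lemma Phi_lip (R : realType) m p (fy : 'rV[R]_m -> R) (gy : 'rV[R]_m -> 'rV[R]_p)
  (Y : set 'rV[R]_m) (Gb : R) :
  continuous fy -> (forall k, continuous (fun y => gy y 0 k)) -> compact Y -> Y !=set0 ->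
  (forall y, Y y -> \sum_(k < p) `|gy y 0 k| <= Gb) ->
  forall a b : 'rV[R]_p,
  inf [set 0 * sqnorm y + fy y + dotp a (gy y) | y in Y] <=
  inf [set 0 * sqnorm y + fy y + dotp b (gy y) | y in Y] + Gb * `|a - b|.
Proof.
move=> cf cg cY Y0 hG a b.
rewrite -lerBlDr; apply: lb_le_inf.
  by case: Y0 => y Yy; exists (0 * sqnorm y + fy y + dotp b (gy y)), y.
move=> _ [y Yy <-].
have hlb := lb_img (cont_Lag (lam:=a) cf cg) cY Y0.
rewrite lerBlDr; apply: le_trans (ge_inf hlb _) _; first by exists y.
rewrite -[leRHS]addrA lerD2l /dotp -lerBlDl -sumrB.
have e : \sum_(i < p) (a 0 i * gy y 0 i - b 0 i * gy y 0 i) =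
         \sum_(i < p) ((a - b) 0 i * gy y 0 i).
  by apply: eq_bigr => i _; rewrite !mxE mulrBl.
rewrite e; apply: (@le_trans _ _ (\sum_(i < p) `|a - b| * `|gy y 0 i|)).
  apply: ler_sum => i _; apply: le_trans (ler_norm _) _.
  by rewrite normrM ler_wpM2r // mx_entry_le.
rewrite -mulr_sumr mulrC ler_wpM2r //; exact: hG.
Qed.

Lemma strong_dual (R : realType) m p (fy : 'rV[R]_m -> R) (gy : 'rV[R]_m -> 'rV[R]_p)
  (Y : set 'rV[R]_m) :
  continuous fy -> (forall k, continuous (fun y => gy y 0 k)) ->
  convex_fun fy -> (forall k, convex_fun (fun y => gy y 0 k)) ->
  compact Y -> convex_setR Y ->
  (forall y, vle (gy y) 0 -> Y y) -> (exists y, vlt (gy y) 0) ->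
  exists lam, vle 0 lam /\
  inf [set fy y | y in [set y | vle (gy y) 0]] <=
  inf [set 0 * sqnorm y + fy y + dotp lam (gy y) | y in Y].
Proof.
move=> cf cg vf vg cY vY sub [yb hyb].
have ybf : vle (gy yb) 0.
  by move=> i; rewrite mxE; apply: ltW; have := hyb i; rewrite mxE.
have gneg k : 0 < - gy yb 0 k by rewrite oppr_gt0; have := hyb k; rewrite mxE.
have Y0 : Y !=set0 by exists yb; apply: sub.
set v := inf [set fy y | y in [set y | vle (gy y) 0]].
have hlbS : has_lbound [set fy y | y in [set y | vle (gy y) 0]].
  have [l hl] := lb_img cf cY Y0.
  by exists l => _ [y hy <-]; apply: hl; exists y => //; apply: sub.
have vle_f y : vle (gy y) 0 -> v <= fy y.
  by move=> hy; apply: ge_inf => //; exists y.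
pose Ka := fy yb - v + 1.
have Ka0 : 0 <= Ka by have := vle_f yb ybf; rewrite /Ka; lra.
pose M := \sum_(j < p) Ka / (- gy yb 0 j).
have M0 : 0 <= M by apply: sumr_ge0 => j _; apply: divr_ge0 => //; apply: ltW.
have approx : forall d, 0 < d <= 1 -> exists lam : 'rV[R]_p,
    (forall k, 0 <= lam 0 k <= M) /\
    forall y, Y y -> v - d <= fy y + dotp lam (gy y).
  move=> d /andP [d0 d1].
  have hc : forall y, vle (gy y) 0 -> v - d < fy y.
    by move=> y hy; have := vle_f y hy; lra.
  have [lam [hl0 hl]] := approx_dual cf cg vf vg cY vY sub (ex_intro _ yb hyb) hc.
  exists lam; split => // k.
  have l0 : 0 <= lam 0 k by have := hl0 k; rewrite mxE.
  rewrite l0 /=.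
  have h := hl yb (sub yb ybf).
  have hs : \sum_(j < p) lam 0 j * (- gy yb 0 j) <= Ka.
    have : \sum_(j < p) lam 0 j * (- gy yb 0 j) = - dotp lam (gy yb).
      by rewrite /dotp -sumrN; apply: eq_bigr => j _; rewrite mulrN.
    move=> ->; rewrite /Ka; lra.
  have hk : lam 0 k * (- gy yb 0 k) <= Ka.
    apply: le_trans hs; apply: (term_le_sum k (a := fun j => lam 0 j * (- gy yb 0 j))).
    move=> j; apply: mulr_ge0; last exact: ltW.
    by have := hl0 j; rewrite mxE.
  apply: le_trans (term_le_sum k (a := fun j => Ka / (- gy yb 0 j)) _).
    by rewrite ler_pdivlMr.
  by move=> j; apply: divr_ge0 => //; apply: ltW.
have cH : continuous (fun y => \sum_(k < p) `|gy y 0 k|).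
  by apply: cont_sum => k; apply: cont_norm.
have [c0 _ hc0] := EVTmax cH cY Y0.
set Gb := \sum_(k < p) `|gy c0 0 k| in hc0.
have Gb0 : 0 <= Gb by apply: sumr_ge0 => k _.
pose Phi (lam : 'rV[R]_p) := inf [set 0 * sqnorm y + fy y + dotp lam (gy y) | y in Y].
have cPhi : continuous Phi.
  have := @lip_cont R _ Phi Gb Gb0; apply => a b.
  have h1 := Phi_lip cf cg cY Y0 hc0 a b.
  have h2 := Phi_lip cf cg cY Y0 hc0 b a.
  rewrite distrC in h2.
  rewrite ler_norml; apply/andP; split; rewrite /Phi; lra.
pose B := [set l : 'rV[R]_p | forall i, `[0, M]%classic (l ord0 i)].
have cB : compact B := rV_compact (A := fun _ => `[0, M]%classic) (fun _ => @segment_compact R 0 M).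
have B0 : B !=set0.
  by exists 0 => i /=; rewrite mxE in_itv /= lexx M0.
have [ls Bls hls] := EVTmax cPhi cB B0.
exists ls; split.
  by move=> i; have := Bls i; rewrite /= in_itv /= mxE => /andP [].
apply: le_by_delta => d hd.
have [lam [hlB hl]] := approx d hd.
have Blam : B lam by move=> i; rewrite /= in_itv /=; exact: hlB.
apply: le_trans (hls lam Blam).
apply: lb_le_inf.
  by case: Y0 => y Yy; exists (0 * sqnorm y + fy y + dotp lam (gy y)), y.
by move=> _ [y Yy <-]; rewrite mul0r add0r; apply: hl.
Qed.

Unset Implicit Arguments.

Theorem proposition4 (R : realType) (n m p q : nat)
  (F f : 'rV[R]_n -> 'rV[R]_m -> R)
  (g : 'rV[R]_n -> 'rV[R]_m -> 'rV[R]_p)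
  (G : 'rV[R]_n -> 'rV[R]_q) (Y : set 'rV[R]_m)
  (* (A1) *)
  (hfconv : forall x, convex_fun (f x))
  (hgconv : forall x (k : 'I_p), convex_fun (fun y => g x y 0 k))
  (hfC2 : C2 (uncurryv f))
  (hgC2 : forall k : 'I_p, C2 (uncurryv (fun x y => g x y 0 k)))
  (* (A2) *)
  (hYcomp : compact Y) (hYconv : convex_setR Y)
  (hYint : [set y | exists x, Xset G x /\ vle (g x y) 0] `<=` interior Y)
  (* (R1) *)
  (hslater : forall x, Xset G x -> exists y, vlt (g x y) 0)
  (eps : R) (heps : 0 <= eps) (xb : 'rV[R]_n) (yb : 'rV[R]_m) :
  BLP_minimizer F f g G eps xb yb <->
  exists lam : 'rV[R]_p, vle 0 lam /\ DBP_minimizer F f g G Y eps 0 xb yb lam.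
Proof.
have cfx x : continuous (f x).
  have e : f x = uncurryv f \o (fun y => row_mx x y).
    by apply: funext => z; rewrite /uncurryv /= row_mxKl row_mxKr.
  rewrite e => y; apply: continuous_comp; [exact: cont_row_mx | exact: hfC2.1].
have cgx x k : continuous (fun y => g x y 0 k).
  have e : (fun y => g x y 0 k) =
      uncurryv (fun x y => g x y 0 k) \o (fun y => row_mx x y).
    by apply: funext => z; rewrite /uncurryv /= row_mxKl row_mxKr.
  rewrite e => y; apply: continuous_comp; [exact: cont_row_mx | exact: (hgC2 k).1].
have sub x : Xset G x -> forall y, vle (g x y) 0 -> Y y.
  by move=> hx y hy; apply: interior_subset; apply: hYint; exists x.
have feas x : Xset G x -> exists y, vle (g x y) 0.
  move=> hx; have [y hy] := hslater x hx; exists y => i; rewrite mxE.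
  by apply: ltW; have := hy i; rewrite mxE.
have WD x : Xset G x -> forall lam, vle 0 lam ->
    h_mu f g Y 0 lam x <= llval f g x.
  move=> hx lam hl.
  exact: (weak_dual (cfx x) (cgx x) hYcomp (sub x hx) (feas x hx) hl).
have SD x : Xset G x -> exists lam, vle 0 lam /\ llval f g x <= h_mu f g Y 0 lam x.
  move=> hx.
  exact: (strong_dual (cfx x) (cgx x) (hfconv x) (hgconv x) hYcomp hYconv
    (sub x hx) (hslater x hx)).
split.
- move=> [[hG [hf hg]] hmin].
  have [lam [hl hd]] := SD xb hG.
  exists lam; split => //; split.
    split => //; split => //; split => //; lra.
  move=> x y lam' [hGx [hgx [hl' hfx]]]; apply: hmin.
  split => //; split => //; have := WD x hGx lam' hl'; lra.
- move=> [lam [hl [[hG [hg [_ hf]]] hmin]]]; split.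
    split => //; split => //; have := WD xb hG lam hl; lra.
  move=> x y [hGx [hfx hgx]].
  have [lam' [hl' hd]] := SD x hGx.
  apply: (hmin x y lam'); split => //; split => //; split => //; lra.
Qed.
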